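(* Let $t$ be a positive integer, $\mathbf v$ a good vector with respect to $t$, and $n=4t+1$ if $|\mathbf v|=2t$, $n=4t+2$ if $|\mathbf v|=2t+1$. Then the code of Construction C built from $\mathbf v$ is an $\bigl(n,(t+1)n,k,n\bigr)$-BAC over $\mathbb{F}_q$ with $k=\bigl\lfloor(\sqrt{t+\tfrac14}+\tfrac12)^2\bigr\rfloor$.
   Context: Fix a finite field $\mathbb{F}_q$. Good vector: for a positive integer $t$, $\mathbf v=(v_1,\dots,v_{2t})\in[t]^{2t}$ or $\mathbf v\in\{0,\dots,t\}^{2t+1}$ is good w.r.t. $t$ if every $j\in[t]$ appears exactly twice in $\mathbf v$ and whenever $v_i=v_{i'}=j\in[t]$ with $i<i'$ then $i'-i=j$; for $j\in[t]$ let $j(\mathbf v)=\max\{i:v_i=j\}$. Construction C: indices modulo $n$ with representatives in $[n]$; for $\mathbf x\in\mathbb{F}_q^n$, $i\in[n]$, $j\in[t]$ put $y_{i,j}=x_{i-t-j(\mathbf v)}+x_{i-t-j(\mathbf v)+j}$ and $\mathcal C(\mathbf x)=(\mathbf c_1,\dots,\mathbf c_n)$ with $\mathbf c_i=(x_i,y_{i,1},\dots,y_{i,t})$. An $(n,N,k,m)$-batch array code (BAC) over $\mathbb{F}_q$ is an $\mathbb{F}_q$-linear map $\mathbf x\mapsto(\mathbf c_1,\dots,\mathbf c_m)$ with buckets $\mathbf c_\ell\in\mathbb{F}_q^{N_\ell}$, $N_\ell\ge1$, $\sum_\ell N_\ell=N$, such that for every multiset $\{\{i_1,\dots,i_k\}\}$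 of elements of $[n]$ there is a partition of $[m]$ into $k$ sets $R_1,\dots,R_k$ such that for each $j\in[k]$, $x_{i_j}$ is an $\mathbb{F}_q$-linear combination of values $f_\ell(\mathbf c_\ell)$, $\ell\in R_j$, for some linear functionals $f_\ell$ (independent of $\mathbf x$). *)

(* Defs.v *)
From HB Require Import structures.
From mathcomp Require Import all_boot all_order all_algebra all_field.
Set Implicit Arguments. Unset Strict Implicit. Unset Printing Implicit Defensive.
Import Order.TTheory GRing.Theory Num.Theory.
Local Open Scope ring_scope.

(* Good vector w.r.t. t.  v is a list; positions are 1-based in the paper,
   0-based here (nth 0 v i is v_{i+1}); differences of positions agree. *)
Definition good (t : nat) (v : seq nat) : Prop :=
  ((size v = (2 * t)%N /\ forall i, (i < size v)%N -> (1 <= nth 0%N v i <= t)%N)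
   \/ (size v = (2 * t).+1 /\ forall i, (i < size v)%N -> (nth 0%N v i <= t)%N))
  /\ (forall j, (1 <= j <= t)%N -> count_mem j v = 2%N)
  /\ (forall i i' j, (i < i')%N -> (i' < size v)%N -> (1 <= j <= t)%N ->
        nth 0%N v i = j -> nth 0%N v i' = j -> (i' - i)%N = j).

Definition jpos (v : seq nat) (j : nat) : nat :=
  \max_(i < size v | nth 0%N v i == j) i.+1.

Lemma shift_proof n (i : 'I_n) (d : int) : (`|((i%:Z + d) %% n%:Z)%Z|%N < n)%N.
Proof.
have n0 : (0 < n)%N by apply: leq_ltn_trans (ltn_ord i).
have h0 : (0 <= (i%:Z + d) %% n%:Z)%Z by rewrite modz_ge0 // lt0n_neq0.
rewrite -ltz_nat gez0_abs //; exact: ltz_pmod.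
Qed.

Definition shift n (i : 'I_n) (d : int) : 'I_n := Ordinal (shift_proof i d).

(* Construction C (0-based: bucket i : 'I_n is c_{i+1}, x 0 i is x_{i+1};
   component 0 of the bucket is x_i, component j in 1..t is y_{i,j}). *)
Definition constrC (F : fieldType) (t : nat) (v : seq nat) (n : nat)
    (x : 'rV[F]_n) (i : 'I_n) : 'rV[F]_(t.+1) :=
  \row_(j < t.+1)
    if j == 0%N :> nat then x 0 i
    else x 0 (shift i (- (t%:Z + (jpos v j)%:Z)))
         + x 0 (shift i (- (t%:Z + (jpos v j)%:Z) + (j : nat)%:Z)).

(* (n, N, k, m)-batch array code with bucket sizes Nl; the requested
   multiset {{i_1..i_k}} is given as a k-tuple req; a partition of the
   m buckets into k parts R_1..R_k is given by R : 'I_m -> 'I_k; linear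
   functional f_l on bucket l is c |-> sum_u f l 0 u * c 0 u. *)
Definition is_BAC (F : fieldType) (n N k m : nat) (Nl : 'I_m -> nat)
    (enc : 'rV[F]_n -> forall l : 'I_m, 'rV[F]_(Nl l)) : Prop :=
  (forall (a : F) x y l, enc (a *: x + y) l = a *: enc x l + enc y l)
  /\ (forall l, (0 < Nl l)%N)
  /\ (\sum_(l < m) Nl l)%N = N
  /\ forall req : 'I_k -> 'I_n,
       exists R : 'I_m -> 'I_k,
       exists f : forall l : 'I_m, 'rV[F]_(Nl l),
       forall (j : 'I_k) (x : 'rV[F]_n),
         x 0 (req j) = \sum_(l < m | R l == j) \sum_(u < Nl l) f l 0 u * enc x l 0 u.

Definition kval (t : nat) : nat :=
  `|Num.floor ((sqrtC (t%:R + 4%:R^-1) + 2%:R^-1) ^+ 2 : algC)|%N.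

Definition nC (t : nat) (v : seq nat) : nat :=
  if size v == (2 * t)%N then (4 * t + 1)%N else (4 * t + 2)%N.

(* Main.v *)
Require Import Defs.
From HB Require Import structures.
From mathcomp Require Import all_boot all_order all_algebra all_field.
From mathcomp Require Import zify ring lra.
Set Implicit Arguments. Unset Strict Implicit. Unset Printing Implicit Defensive.
Import Order.TTheory GRing.Theory Num.Theory.

Lemma kval_bound t : (0 < t)%N -> (0 < kval t)%N /\
  forall a, kval t = (a + t + 1)%N -> ((2*a+1)^2 <= 4*t+1)%N.
Proof.
move=> t0; rewrite /kval.
set x : algC := sqrtC _.
have x0 : (0 <= x)%R by rewrite sqrtC_ge0 addr_ge0 // invr_ge0.
have x2 : (x ^+ 2 = t%:R + 4%:R^-1)%R by rewrite sqrtCK.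
set y : algC := ((x + _) ^+ 2)%R.
have yE : (y = t%:R + 2%:R^-1 + x)%R.
  by rewrite /y sqrrD x2; field.
have yr : y \is Num.real.
  by apply: ger0_real; rewrite /y exprn_ge0 // addr_ge0 // invr_ge0.
have z0 : (0 <= Num.floor y)%R.
  by rewrite real_floor_ge0 // yE addr_ge0 // addr_ge0 // invr_ge0.
have kE : ((`|Num.floor y|%N)%:R = (Num.floor y)%:~R :> algC)%R.
  have zz : (Posz `|Num.floor y|%N = Num.floor y) by rewrite gez0_abs.
  by rewrite -[in RHS]zz.
split.
  have : (1 <= Num.floor y)%R.
    rewrite real_floor_ge_int // yE.
    have t1 : (1 <= t%:R :> algC)%R by rewrite ler1n.
    rewrite -addrA; apply: le_trans t1 _; rewrite lerDl addr_ge0 // invr_ge0 // ler0n.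
  have zz : (Posz `|Num.floor y|%N = Num.floor y) by rewrite gez0_abs.
  by move=> h; rewrite -ltz_nat zz.
move=> a ka.
have := real_floor_le yr; rewrite -kE ka yE !natrD => h.
have h2 : ((2 * a + 1)%:R <= 2 * x :> algC)%R.
  have e1 : (a%:R + t%:R + 1%:R = t%:R + (a%:R + 1) :> algC)%R by ring.
  have e2 : (t%:R + 2^-1 + x = t%:R + (2^-1 + x) :> algC)%R by ring.
  rewrite e1 e2 lerD2l in h.
  have : (2 * (a%:R+1) - 1 <= 2 * (2^-1 + x) - 1 :> algC)%R by rewrite lerD2r ler_pM2l.
  have e3 : (2 * (a%:R+1) - 1 = (2 * a + 1)%:R :> algC)%R by rewrite natrD natrM; ring.
  have e4 : (2 * (2^-1 + x) - 1 = 2 * x :> algC)%R by field.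
  by rewrite e3 e4.
have h3 : (((2 * a + 1)%:R) ^+ 2 <= (2 * x) ^+ 2 :> algC)%R.
  by rewrite ler_sqr // ?nnegrE // mulr_ge0.
rewrite exprMn x2 -natrX in h3.
rewrite -(ler_nat algC) natrD natrM.
have -> : (4 * t%:R + 1 = 2 ^+ 2 * (t%:R + 4^-1) :> algC)%R by field.
exact: h3.
Qed.

Lemma budget t k s m : (0 < k)%N ->
  (forall a, k = (a + t + 1)%N -> ((2*a+1)^2 <= 4*t+1)%N) ->
  (k <= s * m)%N -> (2 * k <= 2 * t + s + m)%N.
Proof.
move=> k0 hk ksm.
case: (leqP (2 * k) (2 * t + s + m)) => // H; exfalso.
have s0 : (0 < s)%N by case: s ksm {H} => //; rewrite mul0n; lia.
have m0 : (0 < m)%N by case: m ksm {H} => //; rewrite muln0; lia.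
have ka : k = ((k - t - 1) + t + 1)%N by lia.
have := hk _ ka.
set a := (k - t - 1)%N.
have hsm : (s + m <= 2 * a + 1)%N by lia.
have : ((s + m) ^ 2 <= (2 * a + 1) ^ 2)%N by rewrite leq_exp2r.
have : (4 * (s * m) <= (s + m) ^ 2)%N.
  rewrite expnS expn1. have e : (s + m) * (s + m) = 4 * (s * m) + (s - m) * (s - m) + (m - s) * (m - s) by nia.
  rewrite e; lia.
move=> h1 h2 h3. rewrite ka in ksm. rewrite !expnS !expn0 !muln1 in h1 h2 h3. nia.
Qed.


Lemma notdisjP (T : finType) (A B : {set T}) :
  ~~ [disjoint A & B] -> exists b, b \in A /\ b \in B.
Proof.
by rewrite -setI_eq0 => /set0Pn [b]; rewrite inE => /andP; exists b.
Qed.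

Lemma notdisjI (T : finType) (A B : {set T}) b :
  b \in A -> b \in B -> ~~ [disjoint A & B].
Proof. by move=> bA bB; rewrite -setI_eq0; apply/set0Pn; exists b; rewrite inE bA bB. Qed.

Lemma card_has_le (T : eqType) (n : nat) (F : T -> {set 'I_n}) (s : seq T) :
  (forall x, #|F x| <= 2) -> #|[set b | has (fun x => b \in F x) s]| <= 2 * size s.
Proof.
move=> hF; elim: s => [|x s IH] /=.
  by rewrite (_ : [set b | false] = set0) ?cards0 //; apply/setP => b; rewrite !inE.
have -> : [set b | (b \in F x) || has (fun x => b \in F x) s] =
    F x :|: [set b | has (fun x => b \in F x) s].
  by apply/setP => b; rewrite !inE.
apply: leq_trans (leq_card_setU _ _) _.
have := hF x; lia.
Qed.

Section Greedy.
Variables (n k : nat) (P : finType) (yb xb : 'I_n -> P -> 'I_n) (req : 'I_k -> 'I_n).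
Definition pairS a d : {set 'I_n} := [set yb a d; xb a d].
Hypothesis Hna : forall a d, a \notin pairS a d.
Hypothesis Hdisj : forall a d d' b, b \in pairS a d -> b \in pairS a d' -> d = d'.

Lemma count_hit (a : 'I_n) (S : {set 'I_n}) :
  #|[set d | ~~ [disjoint pairS a d & S]]| <= #|S|.
Proof.
pose h d := if yb a d \in S then yb a d else xb a d.
have hS : forall d, ~~ [disjoint pairS a d & S] -> h d \in S /\ h d \in pairS a d.
  move=> d /notdisjP [b [bP bS]]; rewrite /h.
  case: ifP => ys; first by rewrite !inE eqxx.
  move: bP; rewrite !inE => /orP[/eqP e|/eqP e]; first by rewrite -e bS in ys.
  by rewrite -e bS eqxx orbT.
rewrite -(card_in_imset (f := h)).
  apply: subset_leq_card; apply/subsetP => b /imsetP [d]; rewrite inE => /hS [hs _] ->.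
  exact: hs.
move=> d d'; rewrite !inE => /hS [_ h1] /hS [_ h2] e.
by apply: (Hdisj h1); rewrite e.
Qed.

Lemma greedy (p0 : P) (j0 : 'I_k) (B0 : {set 'I_n}) (rs : seq 'I_k) :
  uniq rs -> (forall j, j \in rs -> req j \in B0) ->
  (forall i, i < size rs ->
     #|B0| + 2 * count (fun j' => req j' != req (nth j0 rs i)) (take i rs)
       + count (fun j' => req j' == req (nth j0 rs i)) (take i rs) <= #|P|) ->
  exists g : 'I_k -> P,
    (forall j, j \in rs -> [disjoint pairS (req j) (g j) & B0]) /\
    (forall j j', j \in rs -> j' \in rs -> j != j' ->
       [disjoint pairS (req j) (g j) & pairS (req j') (g j')]).
Proof.
elim/last_ind: rs => [|rs j IH] ; first by move=> *; exists (fun _ => p0).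
rewrite rcons_uniq => /andP [jrs urs] hB hc.
have [g [gB gD]] : exists g : 'I_k -> P,
    (forall j, j \in rs -> [disjoint pairS (req j) (g j) & B0]) /\
    (forall j j', j \in rs -> j' \in rs -> j != j' ->
       [disjoint pairS (req j) (g j) & pairS (req j') (g j')]).
  apply: IH => //.
    by move=> x xr; apply: hB; rewrite mem_rcons inE xr orbT.
  move=> i ir; have := hc i; rewrite size_rcons ltnS (ltnW ir) nth_rcons ir -cats1 takel_cat ?(ltnW ir) //.
  by move=> /(_ isT).
set a := req j.
set Bl := [set d | ~~ [disjoint pairS a d & B0] ||
   has (fun j' => ~~ [disjoint pairS a d & pairS (req j') (g j')]) rs].
set Uo := [set b | has (fun j' => b \in pairS (req j') (g j')) [seq j' <- rs | req j' != a]].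
set S := (B0 :\ a) :|: Uo.
set own := [set g j' | j' in [seq j' <- rs | req j' == a]].
have sub : Bl \subset [set d | ~~ [disjoint pairS a d & S]] :|: own.
  apply/subsetP => d; rewrite !inE => /orP [/notdisjP [b [bP bB]] | /hasP [j' j'r]].
    apply/orP; left; apply: (notdisjI bP).
    rewrite !inE bB andbT; apply/orP; left; apply/negP => /eqP e; subst b; have := Hna a d; by rewrite bP.
  move=> /notdisjP [b [bP bQ]].
  case: (eqVneq (req j') a) => e.
    apply/orP; right; apply/imsetP; exists j'; first by rewrite mem_filter e eqxx.
    by rewrite e in bQ; apply: (Hdisj bP bQ).
  apply/orP; left; apply: (notdisjI bP).
  rewrite !inE; apply/orP; right; apply/hasP; exists j' => //.
  by rewrite mem_filter e.
have cardBl : #|Bl| < #|P|.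
  have := hc (size rs); rewrite size_rcons ltnSn nth_rcons ltnn eqxx -cats1 take_size_cat //.
  move=> /(_ isT) hc'.
  apply: leq_ltn_trans (subset_leq_card sub) _.
  apply: leq_ltn_trans (leq_card_setU _ _) _.
  have h1 := count_hit a S.
  have h2 : #|S| <= #|B0 :\ a| + #|Uo| by apply: leq_card_setU.
  have h3 : #|Uo| <= 2 * count (fun j' => req j' != a) rs.
    rewrite -size_filter; apply: card_has_le => x; rewrite cards2; by case: (_ != _).
  have h4 : #|own| <= count (fun j' => req j' == a) rs.
    rewrite -size_filter; apply: leq_trans (leq_imset_card _ _) (card_size _).
  have h5 := cardsD1 a B0.
  have aB : a \in B0 by apply: hB; rewrite mem_rcons mem_head.
  move: h5; rewrite aB /= => h5.
  rewrite -/a in hc'.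
  have h6 := leq_trans h1 h2. have h7 := leq_add h6 h4. apply: leq_ltn_trans h7 _. set c1 := count (fun j' => req j' != a) rs in h3 hc' *. set c2 := count (fun j' => req j' == a) rs in h4 hc' *. move: h3 hc' h5. clear. clearbody c1 c2 Uo a. set x := #|P|. set y := #|B0 :\ a|. set z := #|B0|. set u := #|Uo|. clearbody x y z u. lia.
have [d dBl] : exists d, d \notin Bl.
  case: (pickP (fun d => d \notin Bl)) => [d dd | hn]; first by exists d.
  have : Bl = setT by apply/setP => d; rewrite in_setT; exact: negbFE (hn d).
  by move=> e; rewrite e cardsT ltnn in cardBl.
move: dBl; rewrite inE negb_or negbK => /andP [dB0 /hasPn dD].
exists (fun x => if x == j then d else g x); split.
  move=> x; rewrite mem_rcons inE; case: eqP => [-> _ //| _ /= xr]; exact: gB.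
move=> x y xin yin xy.
have xr : x != j -> x \in rs by move: xin; rewrite mem_rcons inE => /orP [/eqP ->|//]; rewrite eqxx.
have yr : y != j -> y \in rs by move: yin; rewrite mem_rcons inE => /orP [/eqP ->|//]; rewrite eqxx.
case: (eqVneq x j) xy => [-> |xj] xy; case: (eqVneq y j) xy => [-> |yj] xy /=.
- by [].
- by have := dD y (yr yj); rewrite negbK.
- by have := dD x (xr xj); rewrite negbK disjoint_sym.
- by apply: gD => //; [apply: xr | apply: yr].
Qed.

Definition Uset (c : 'I_k -> option P) j : {set 'I_n} :=
  if c j is Some d then pairS (req j) d else [set req j].

Lemma alloc (p0 : P) : (0 < k)%N ->
  (forall s m, k <= s * m -> 2 * k <= #|P| + s + m) ->
  exists c : 'I_k -> option P, forall j j', j != j' -> [disjoint Uset c j & Uset c j'].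
Proof.
move=> k0 hbud.
pose j0 : 'I_k := Ordinal k0.
pose rep (j : 'I_k) := [forall j' : 'I_k, (j' < j) ==> (req j' != req j)].
have repU : forall j j', rep j -> rep j' -> req j = req j' -> j = j'.
  move=> j j' rj rj' e; case: (ltngtP j j') => [lt|lt|/val_inj //].
    by move/forallP: rj' => /(_ j); rewrite lt e eqxx.
  by move/forallP: rj => /(_ j'); rewrite lt e eqxx.
have repE : forall j, exists2 r, rep r & req r = req j.
  move=> j; case: (@arg_minnP _ j (fun i => req i == req j) (fun i : 'I_k => val i) (eqxx _)) => r /eqP rj hr.
  exists r => //; apply/forallP => i; apply/implyP => ir; apply/negP => /eqP e.
  have := hr i; rewrite e rj eqxx => /(_ isT); by rewrite leqNgt ir.
pose B0 := [set req j | j in 'I_k].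
pose cnt a := #|[set j' | req j' == a]|.
pose jm := [arg max_(j > j0) cnt (req j)].
pose astar := req jm.
pose m := cnt astar.
have hm : forall a, cnt a <= m.
  move=> a; case: (boolP (a \in B0)) => [/imsetP [j _ ->]|aB].
    rewrite /m /astar /jm; case: arg_maxnP => //= i _ hi; exact: hi.
  rewrite /cnt (_ : [set j' | req j' == a] = set0) ?cards0 //.
  apply/setP => j; rewrite !inE; apply/negP => /eqP e; move: aB; by rewrite -e imset_f.
pose s := #|B0|.
have ksm : k <= s * m.
  rewrite -{1}(card_ord k) -sum1_card (partition_big (fun j => req j) (mem B0)) /=; last first.
    by move=> i _; rewrite imset_f.
  rewrite /s -sum_nat_const; apply: leq_sum => a _.
  apply: leq_trans (hm a); rewrite /cnt -sum1_card; apply: eq_leq; apply: eq_bigl => i.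
  by rewrite inE.
have bud := hbud _ _ ksm.
pose O := [set j | ~~ rep j && (req j != astar)].
pose X := [set j | ~~ rep j && (req j == astar)].
have cntO : #|O| + #|X| + s <= k.
  have : #|[set j | rep j]| + #|O| + #|X| = k.
    have e1 : O :&: X = set0.
      apply/setP => j; rewrite !inE; by case: (rep j); case: (req j == astar).
    have e2 : [set j | rep j] :&: (O :|: X) = set0.
      apply/setP => j; rewrite !inE; by case: (rep j); case: (req j == astar).
    have e3 : [set j | rep j] :|: (O :|: X) = setT.
      apply/setP => j; rewrite !inE; by case: (rep j); case: (req j == astar).
    rewrite -addnA; have := cardsU O X; rewrite e1 cards0 subn0 => <-.
    have := cardsU [set j | rep j] (O :|: X); rewrite e2 cards0 subn0 e3 cardsT card_ord.
    by move=> e; exact: esym e.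
  suff : s <= #|[set j | rep j]| by lia.
  rewrite /s (_ : B0 = [set req j | j in [set j | rep j]]) ?leq_imset_card //.
  apply/setP => a; apply/imsetP/imsetP => [[j _ ->]|[j _ ->]]; last by exists j.
  by have [r rr e] := repE j; exists r; rewrite ?inE // e.
have cntX : m <= #|X|.+1.
  have [r rr er] := repE jm.
  have sub : [set j' | req j' == astar] \subset r |: X.
    apply/subsetP => j; rewrite !inE => ej; case: (boolP (rep j)) => rj /=.
      by apply/orP; left; apply/eqP; apply: repU => //; rewrite er (eqP ej).
    by rewrite ej orbT.
  apply: leq_trans (subset_leq_card sub) _; rewrite cardsU1; by case: (r \notin X).
pose rs := enum O ++ enum X.
have memrs : forall j, (j \in rs) = ~~ rep j.
  move=> j; rewrite mem_cat !mem_enum !inE; by case: (rep j); case: (req j == astar).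
have urs : uniq rs.
  rewrite cat_uniq !enum_uniq andbT /=; apply/hasPn => j; rewrite !mem_enum !inE => /andP [_ e].
  by rewrite e andbF.
have hB : forall j, j \in rs -> req j \in B0 by move=> j _; rewrite imset_f.
have hc : forall i, i < size rs ->
     #|B0| + 2 * count (fun j' => req j' != req (nth j0 rs i)) (take i rs)
       + count (fun j' => req j' == req (nth j0 rs i)) (take i rs) <= #|P|.
  move=> i; rewrite size_cat -!cardE => hi.
  case: (ltnP i #|O|) => hiO.
    rewrite /rs nth_cat -cardE hiO takel_cat -?cardE ?(ltnW hiO) //.
    set x := nth j0 (enum O) i.
    have := count_predC (fun j' => req j' != req x) (take i (enum O)).
    rewrite size_take -cardE hiO.
    rewrite (@eq_count _ (predC (fun j' => req j' != req x)) (fun j' => req j' == req x)); last first.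
      by move=> y /=; rewrite negbK.
    rewrite -/s; lia.
  rewrite /rs nth_cat -cardE ltnNge hiO /= take_cat -cardE ltnNge hiO /=.
  set i' := i - #|O|.
  have i'X : i' < #|X| by rewrite /i'; lia.
  set x := nth j0 (enum X) i'.
  have xX : req x = astar.
    have : x \in enum X by rewrite /x mem_nth // -cardE.
    by rewrite mem_enum inE => /andP [_ /eqP].
  rewrite xX !count_cat.
  have c1 : count (fun j' => req j' != astar) (enum O) = #|O|.
    rewrite cardE -(count_predT (enum O)); apply: eq_in_count => y.
    by rewrite mem_enum inE => /andP [_ ->].
  have c2 : count (fun j' => req j' != astar) (take i' (enum X)) = 0.
    rewrite -(count_pred0 (take i' (enum X))); apply: eq_in_count => y /mem_take.
    by rewrite mem_enum inE => /andP [_ ->].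
  have c3 : count (fun j' => req j' == astar) (enum O) = 0.
    rewrite -(count_pred0 (enum O)); apply: eq_in_count => y.
    by rewrite mem_enum inE => /andP [_ /negbTE ->].
  have c4 : count (fun j' => req j' == astar) (take i' (enum X)) = i'.
    have -> : count (fun j' => req j' == astar) (take i' (enum X)) = count predT (take i' (enum X)).
      by apply: eq_in_count => y /mem_take; rewrite mem_enum inE => /andP [_ ->].
    by rewrite count_predT size_take -cardE i'X.
  rewrite c1 c2 c3 c4 -/s.
  move: bud cntO cntX i'X; rewrite /i'; set a1 := #|O|; set a2 := #|X|; set a3 := #|P|; clearbody a1 a2 a3 s m; lia.
have [g [gB gD]] := @greedy p0 j0 B0 rs urs hB hc.
exists (fun j => if rep j then None else Some (g j)).
move=> j j' jj'; rewrite /Uset.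
case: (boolP (rep j)) => rj; case: (boolP (rep j')) => rj'.
- rewrite disjoints1 in_set1; apply/negP => /eqP e.
  by rewrite (repU _ _ rj rj' e) eqxx in jj'.
- rewrite disjoints1; apply/negP => h.
  have hj' : j' \in rs by rewrite memrs.
  have rB : req j \in B0 by rewrite imset_f.
  by have := notdisjI h rB; rewrite gB.
- rewrite disjoint_sym disjoints1; apply/negP => h.
  have hj : j \in rs by rewrite memrs.
  have rB : req j' \in B0 by rewrite imset_f.
  by have := notdisjI h rB; rewrite gB.
- by apply: gD; rewrite ?memrs.
Qed.
End Greedy.


Lemma shift_val n (i : 'I_n) d : Posz (shift i d) = ((i%:Z + d) %% n%:Z)%Z.
Proof.
have n0 : (n%:Z != 0)%R by rewrite eqz_nat -lt0n; apply: leq_ltn_trans (ltn_ord i).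
by rewrite /= gez0_abs // modz_ge0.
Qed.

Lemma shift_add n (i : 'I_n) d1 d2 : shift (shift i d1) d2 = shift i (d1 + d2)%R.
Proof.
apply: val_inj; apply/eqP; rewrite -eqz_nat shift_val [X in _ == X]shift_val.
by rewrite shift_val modzDml addrA.
Qed.

Lemma shift_eqmod n (i : 'I_n) d1 d2 : (d1 = d2 %[mod n%:Z])%Z -> shift i d1 = shift i d2.
Proof.
move=> e; apply: val_inj; apply/eqP; rewrite -eqz_nat !shift_val.
by rewrite -modzDmr e modzDmr.
Qed.

Lemma shift_inj n (i : 'I_n) d1 d2 : shift i d1 = shift i d2 -> (d1 = d2 %[mod n%:Z])%Z.
Proof.
move=> /(congr1 (fun x : 'I_n => Posz x)); rewrite !shift_val => /eqP.
by rewrite eqz_modDl => /eqP.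
Qed.

Lemma shift0 n (i : 'I_n) : shift i 0 = i.
Proof.
apply: val_inj; apply/eqP; rewrite -eqz_nat shift_val addr0 modz_small //.
by rewrite lez_nat ltz_nat ltn_ord.
Qed.

Lemma shift_nat_inj n (i : 'I_n) (e1 e2 : nat) : e1 < n -> e2 < n ->
  shift i e1%:Z = shift i e2%:Z -> e1 = e2.
Proof.
move=> h1 h2 /shift_inj; rewrite !modz_small ?lez_nat ?ltz_nat //.
by move=> /eqP; rewrite eqz_nat => /eqP.
Qed.

Lemma jpos_prop t v jj : good t v -> (1 <= jj <= t)%N ->
  jj < jpos v jj /\ jpos v jj <= size v /\
  nth 0%N v (jpos v jj).-1 = jj /\ nth 0%N v ((jpos v jj).-1 - jj) = jj.
Proof.
move=> [hsz [hcnt hdist]] hj.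
have c2 := hcnt jj hj.
have cA : #|[set i : 'I_(size v) | nth 0%N v i == jj]| = 2.
  rewrite -c2 -sum1_count (big_nth 0%N) big_mkord -sum1_card.
  by apply: eq_bigl => i; rewrite inE.
have [i0 i0A] : exists i0, i0 \in [set i : 'I_(size v) | nth 0%N v i == jj].
  by apply/set0Pn; rewrite -card_gt0 cA.
rewrite /jpos (bigop.bigmax_eq_arg i0); last by move: i0A; rewrite inE.
case: arg_maxnP; first by move: i0A; rewrite inE.
move=> im /eqP him hmax.
have [i iA] : exists i, i \in [set i : 'I_(size v) | nth 0%N v i == jj] :\ im.
  apply/set0Pn; rewrite -card_gt0.
  move: (cardsD1 im [set i : 'I_(size v) | nth 0%N v i == jj]); rewrite cA inE him eqxx /=.
  lia.
move: iA; rewrite !inE => /andP [iim /eqP hi].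
have lei : i <= im by have := hmax i; rewrite hi eqxx => /(_ isT).
have ltim : i < im by rewrite ltn_neqAle lei andbT; exact: iim.
have := hdist i im jj ltim (ltn_ord im) hj hi him => e.
rewrite /= ltn_ord; split; first lia.
split => //; split => //.
by rewrite (_ : im - jj = i) //; lia.
Qed.

Section Concrete.
Variables (t : nat) (v : seq nat).
Hypothesis t0 : (0 < t)%N.
Hypothesis gv : good t v.

Lemma nE : nC t v = (size v + 2 * t + 1)%N.
Proof.
rewrite /nC; case: gv => [[[-> _]|[-> _]] _]; first by rewrite eqxx; lia.
by rewrite (_ : (2 * t).+1 == 2 * t = false); lia.
Qed.

Definition jj (d : 'I_t * bool) := (d.1).+1.
Definition pos d := (jpos v (jj d) - (if d.2 then 0 else jj d))%N.
Definition oy d := (t + pos d)%N.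
Definition ox d := if d.2 then jj d else (nC t v - jj d)%N.
Definition ybC (a : 'I_(nC t v)) d := shift a (oy d)%:Z.
Definition xbC (a : 'I_(nC t v)) d := shift a (ox d)%:Z.

Lemma jj_prop d : (1 <= jj d <= t)%N.
Proof. by rewrite /jj ltn_ord. Qed.

Lemma jpos_d d : (jj d < jpos v (jj d) /\ jpos v (jj d) <= size v /\
  nth 0%N v (jpos v (jj d)).-1 = jj d /\ nth 0%N v ((jpos v (jj d)).-1 - jj d) = jj d)%N.
Proof. exact: jpos_prop gv (jj_prop d). Qed.

Lemma pos_prop d : (1 <= pos d <= size v)%N /\ nth 0%N v (pos d).-1 = jj d.
Proof.
have [h1 [h2 [h3 h4]]] := jpos_d d.
rewrite /pos; case: d.2 => /=; first by rewrite subn0 h3; split => //; lia.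
rewrite (_ : (jpos v (jj d) - jj d).-1 = ((jpos v (jj d)).-1 - jj d)%N); last by lia.
by rewrite h4; split => //; lia.
Qed.

Lemma pos_inj d d' : pos d = pos d' -> d = d'.
Proof.
move=> e.
have [_ n1] := pos_prop d; have [_ n2] := pos_prop d'.
have ej : jj d = jj d' by rewrite -n1 -n2 e.
have e1 : d.1 = d'.1 by apply: val_inj; move: ej; rewrite /jj => [[]].
move: e; rewrite /pos ej.
have [h1 _] := jpos_d d'.
move: h1 e1; clear n1 n2 ej.
case: d d' => [j b] [j' b'] /= h1 ej; subst j'.
move: h1; rewrite /jj /=; case: b; case: b' => //= h1 e; exfalso; lia.
Qed.

Lemma oy_range d : (t < oy d /\ oy d + t < nC t v)%N.
Proof. have [h _] := pos_prop d; rewrite nE /oy; lia. Qed.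

Lemma ox_range d : (0 < ox d < nC t v)%N /\ (ox d <= t \/ nC t v - t <= ox d)%N.
Proof. have := jj_prop d; rewrite /ox nE; case: d.2; lia. Qed.

Lemma oy_inj d d' : oy d = oy d' -> d = d'.
Proof. by rewrite /oy => /eqP; rewrite eqn_add2l => /eqP /pos_inj. Qed.

Lemma ox_inj d d' : ox d = ox d' -> d = d'.
Proof.
have := jj_prop d; have := jj_prop d'; rewrite /ox nE.
case: d d' => [j b] [j' b']; rewrite /jj /=.
case: b; case: b' => /= h1 h2 e; try lia.
- by have -> : j = j' by apply: val_inj => /=; lia.
- by have -> : j = j' by apply: val_inj => /=; lia.
Qed.

Lemma oy_ox d d' : oy d != ox d'.
Proof. have := oy_range d; have := ox_range d'; lia. Qed.


Lemma HnaC a d : a \notin pairS ybC xbC a d.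
Proof.
have [h1 h2] := oy_range d; have [h3 _] := ox_range d.
rewrite !inE; apply/negP => /orP [] /eqP e.
  have := shift0 a; rewrite {2}e /ybC -[0%R]/(Posz 0) => /shift_nat_inj; lia.
have := shift0 a; rewrite {2}e /xbC -[0%R]/(Posz 0) => /shift_nat_inj; lia.
Qed.

Lemma HyxC a d : ybC a d != xbC a d.
Proof.
have [h1 h2] := oy_range d; have [h3 _] := ox_range d.
apply/negP => /eqP /shift_nat_inj e; move: (oy_ox d d); rewrite e //; lia.
Qed.

Lemma HdisjC a d d' b : b \in pairS ybC xbC a d -> b \in pairS ybC xbC a d' -> d = d'.
Proof.
have [h1 h2] := oy_range d; have [h3 _] := ox_range d.
have [h1' h2'] := oy_range d'; have [h3' _] := ox_range d'.
rewrite !inE /ybC /xbC => /orP [] /eqP -> /orP [] /eqP /shift_nat_inj e.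
- by apply: oy_inj; apply: e; lia.
- by move: (oy_ox d d'); rewrite e //; lia.
- by move: (oy_ox d' d); rewrite e //; lia.
- by apply: ox_inj; apply: e; lia.
Qed.

Definition comp (d : 'I_t * bool) : 'I_t.+1 := @Ordinal t.+1 (jj d) (ltn_ord d.1).

Lemma encC (F : fieldType) (x : 'rV[F]_(nC t v)) a d :
  (constrC t v x (ybC a d) 0 (comp d) - constrC t v x (xbC a d) 0 0 = x 0 a)%R.
Proof.
rewrite !mxE /=.
have [h1 _] := jpos_d d.
rewrite /ybC !shift_add /xbC /oy /pos /ox.
move: h1; rewrite /jj; case: d => [j b]; case: b => /= h1.
  rewrite (_ : ((Posz (t + (jpos v j.+1 - 0))%N) + - (Posz t + Posz (jpos v j.+1)))%R = 0%R); last by lia.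
  rewrite shift0 (_ : ((Posz (t + (jpos v j.+1 - 0))%N) + (- (Posz t + Posz (jpos v j.+1)) + (Posz j.+1)))%R = (Posz j.+1)); last by lia.
  by rewrite addrK.
rewrite (_ : ((Posz (t + (jpos v j.+1 - j.+1))%N) + (- (Posz t + Posz (jpos v j.+1)) + (Posz j.+1)))%R = 0%R); last by lia.
rewrite shift0 (@shift_eqmod _ a _ (Posz (nC t v - j.+1)%N)); first by rewrite addrAC subrr add0r.
have hn : (j.+1 < nC t v)%N by rewrite nE; have := ltn_ord j; lia.
rewrite (_ : (Posz (nC t v - j.+1)%N) = (Posz (nC t v)) + ((Posz (t + (jpos v j.+1 - j.+1))%N) + - (Posz t + Posz (jpos v j.+1))))%R; last by lia.
by rewrite modzDl.
Qed.
End Concrete.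

Lemma sum_delta (F : fieldType) m (c : 'I_m) (g : 'I_m -> F) (s : F) :
  (\sum_(u < m) (s *: \row_w ((w == c)%:R : F)) 0 u * g u = s * g c)%R.
Proof.
rewrite (bigD1 c) //= !mxE eqxx mulr1 big1 ?addr0 // => u /negbTE uc.
by rewrite !mxE uc mulr0 mul0r.
Qed.

Theorem corollary4p9 (F : finFieldType) (t : nat) (v : seq nat) :
  (0 < t)%N -> good t v ->
  @is_BAC F (nC t v) ((t + 1) * nC t v)%N (kval t) (nC t v)
    (fun _ => t.+1) (@constrC F t v (nC t v)).
Proof.
move=> t0 gv.
have [k0 kb] := kval_bound t0.
split.
  move=> a x y l; apply/rowP => u; rewrite !mxE.
  by case: ifP => _; rewrite ?mxE //; ring.
split; first by [].
split; first by rewrite big_const_ord iter_addn_0; lia.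
move=> req.
set n := nC t v. set k := kval t.
have cardP : #|{: 'I_t * bool}| = (2 * t)%N by rewrite card_prod card_ord card_bool; lia.
have hbud : forall s m, (k <= s * m)%N -> (2 * k <= #|{: 'I_t * bool}| + s + m)%N.
  by move=> s m h; rewrite cardP; exact: (@budget t k s m k0 kb h).
have p0 : ('I_t * bool)%type := (Ordinal t0, true).
have [c hc] := alloc req (HnaC t0 gv) (HdisjC t0 gv) p0 k0 hbud.
pose j0 : 'I_k := Ordinal k0.
pose U := Uset (@ybC t v) (@xbC t v) req c.
pose pk l := [pick j | l \in U j].
pose R l := odflt j0 (pk l).
pose e (u0 : 'I_t.+1) (s : F) : 'rV[F]_(t.+1) := (s *: \row_w ((w == u0)%:R : F))%R.
pose f l : 'rV[F]_(t.+1) :=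
  if pk l is Some j then
    (if c j is Some d then (if l == @ybC t v (req j) d then e (comp d) 1%R else e 0%R (-1)%R)
     else e 0%R 1%R)
  else 0%R.
exists R, f => j x.
have pkU : forall l, l \in U j -> pk l = Some j.
  move=> l lU; rewrite /pk; case: pickP => [j' lj' | /(_ j)]; last by rewrite lU.
  congr Some; apply/eqP; rewrite -[j' == j]negbK; apply/negP => ne.
  by have := hc j' j ne; rewrite (negbTE (notdisjI lj' lU)).
pose G l := (\sum_(u < t.+1) f l 0 u * constrC t v x l 0 u)%R.
have step1 : (\sum_(l < n | R l == j) G l = \sum_(l in U j) G l)%R.
  rewrite big_mkcond [RHS]big_mkcond; apply: eq_bigr => l _.
  case: (boolP (l \in U j)) => lU.
    by rewrite /R pkU // eqxx.
  case: ifP => // /eqP Rl.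
  rewrite /G /f /R /pk in Rl *.
  case: (pickP (fun j' => l \in U j')) Rl => [j' lj' /= ej | none _].
    by subst j'; rewrite lj' in lU.
  by rewrite big1 // => u _; rewrite mxE mul0r.
rewrite step1.
have Gf : forall l, l \in U j -> G l = match c j with
     | Some d => if l == @ybC t v (req j) d then constrC t v x l 0%R (comp d) else (- constrC t v x l 0%R 0%R)%R
     | None => constrC t v x l 0%R 0%R end.
  move=> l lU; rewrite /G /f pkU //.
  case: (c j) => [d|]; last by rewrite sum_delta mul1r.
  by case: ifP => _; rewrite sum_delta ?mul1r ?mulN1r.
rewrite /U /Uset in Gf *.
case E: (c j) => [d|] in Gf *.
  rewrite big_setU1 /=; last by rewrite in_set1 HyxC.
  rewrite big_set1 Gf ?in_set2 ?eqxx ?orbT //.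
  rewrite Gf ?in_set2 ?eqxx ?orbT // eq_sym (negbTE (HyxC t0 gv (req j) d)).
  by rewrite encC.
by rewrite big_set1 Gf ?in_set1 ?eqxx // mxE.
Qed.
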